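(* Let $d>K\ge1$, $\mathbf Q\in\mathrm{St}(d,K)$, $\lambda_1>\dots>\lambda_K>0$, $\boldsymbol\Theta=\mathrm{diag}(\sqrt{\lambda_1},\dots,\sqrt{\lambda_K})$, $a_1>\dots>a_K>0$, and let $g$, $d_F$, $\mathcal A_\alpha$, $\rho_\alpha$ be as in the context. Then there exists $\delta\in(0,\tfrac{\sqrt2}{2})$ with $\lambda_Ka_K-\lambda_1a_1\delta>0$ such that for every $\alpha$ with $0\le\alpha<\lambda_Ka_K-\lambda_1a_1\delta$ there exists $\eta_1>0$ such that $$d_F(\mathbf X,\mathbf Q)\le\eta_1\,\rho_\alpha(\mathbf X)\quad\text{for all }\mathbf X\in\mathrm{St}(d,K)\text{ with }d_F(\mathbf X,\mathbf Q)\le\delta.$$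
   Context: $\mathrm{St}(d,K)=\{\mathbf X\in\mathbb R^{d\times K}:\mathbf X^\top\mathbf X=\mathbf I_K\}$. $g(\mathbf X)=\mathrm{tr}(\mathbf X^\top\mathbf Q\boldsymbol\Theta^2\mathbf Q^\top\mathbf X\,\mathrm{diag}(a_1,\dots,a_K))$, to be maximized over $\mathrm{St}(d,K)$. $d_F(\mathbf X,\mathbf Q)=\min_{\mathbf q\in\{1,-1\}^K}\|\mathbf X-\mathbf Q\,\mathrm{diag}(\mathbf q)\|_F$. For $\alpha\ge0$, $\mathcal A_\alpha(\mathbf X)=\alpha\mathbf X+\mathbf Q\boldsymbol\Theta^2\mathbf Q^\top\mathbf X\,\mathrm{diag}(a_1,\dots,a_K)$. If $\mathcal A_\alpha(\mathbf X)=\mathbf U\boldsymbol\Sigma\mathbf V^\top$ is a thin SVD, the residual is $\rho_\alpha(\mathbf X)=\|\mathbf X\mathbf V\boldsymbol\Sigma\mathbf V^\top-\mathcal A_\alpha(\mathbf X)\|_F$ (note $\mathbf V\boldsymbol\Sigma\mathbf V^\top=(\mathcal A_\alpha(\mathbf X)^\top\mathcal A_\alpha(\mathbf X))^{1/2}$, so this does not depend on the SVD chosen). *)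

(* Defs.v *)
From HB Require Import structures.
From mathcomp Require Import all_boot all_order all_algebra.
From mathcomp Require Import reals.
Set Implicit Arguments. Unset Strict Implicit. Unset Printing Implicit Defensive.
Import Order.TTheory GRing.Theory Num.Theory.
Local Open Scope ring_scope.

Section Defs.
Variable R : realType.

Definition frob (m n : nat) (A : 'M[R]_(m, n)) : R :=
  Num.sqrt (\sum_(i < m) \sum_(j < n) A i j ^+ 2).

Definition stiefel (d K : nat) (X : 'M[R]_(d, K)) : Prop := X^T *m X = 1%:M.

(* diag(q) for a sign vector q in {1,-1}^K, encoded by a boolean function *)
Definition sign_diag (K : nat) (q : {ffun 'I_K -> bool}) : 'M[R]_K :=
  diag_mx (\row_i (if q i then 1 else -1)).

Definition dF (d K : nat) (X Q : 'M[R]_(d, K)) : R :=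
  \big[Order.min/frob (X - Q *m sign_diag [ffun=> true])]_(q : {ffun 'I_K -> bool})
     frob (X - Q *m sign_diag q).

Definition Theta (K : nat) (lam : 'I_K -> R) : 'M[R]_K :=
  diag_mx (\row_i Num.sqrt (lam i)).

Definition Aalpha (d K : nat) (Q : 'M[R]_(d, K)) (lam a : 'I_K -> R) (alpha : R)
    (X : 'M[R]_(d, K)) : 'M[R]_(d, K) :=
  alpha *: X + Q *m (Theta lam *m Theta lam) *m Q^T *m X *m diag_mx (\row_i a i).

Definition thin_svd (d K : nat) (A U : 'M[R]_(d, K)) (s : 'rV[R]_K) (V : 'M[R]_K) : Prop :=
  U^T *m U = 1%:M /\ V^T *m V = 1%:M /\ (forall i, 0 <= s 0 i) /\
  A = U *m diag_mx s *m V^T.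

(* The residual rho_alpha(X) computed from a given thin SVD (U, s, V) of A_alpha(X):
   || X V Sigma V^T - A_alpha(X) ||_F  (independent of the chosen SVD). *)
Definition residual (d K : nat) (X A : 'M[R]_(d, K)) (s : 'rV[R]_K) (V : 'M[R]_K) : R :=
  frob (X *m V *m diag_mx s *m V^T - A).

End Defs.

(* Main.v *)
Require Import Defs.
From HB Require Import structures.
From mathcomp Require Import all_boot all_order all_algebra.
From mathcomp Require Import reals.
From mathcomp Require Import ring lra.
Import Order.TTheory GRing.Theory Num.Theory.
Local Open Scope ring_scope.
Set Implicit Arguments. Unset Strict Implicit.

Definition bnd (R : realType) m n (Z : 'M[R]_(m, n)) (c : R) := forall i j, `|Z i j| <= c.

Lemma eqle (R : realType) (x y : R) : x = y -> x <= y.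
Proof. by move=> ->. Qed.

Lemma bnd_mul (R : realType) m n p (A : 'M[R]_(m, n)) (B : 'M[R]_(n, p)) ca cb M0 :
  n%:R <= M0 -> 0 <= ca -> 0 <= cb -> bnd A ca -> bnd B cb -> bnd (A *m B) (M0 * ca * cb).
Proof.
move=> hn hca hcb hA hB i j; rewrite mxE.
apply: le_trans (ler_norm_sum _ _ _) _.
apply: (@le_trans _ _ (\sum_(k < n) ca * cb)).
  by apply: ler_sum => k _; rewrite normrM; apply: ler_pM.
rewrite sumr_const card_ord -mulr_natl -mulrA; apply: ler_wpM2r => //.
exact: mulr_ge0.
Qed.

Lemma bnd_add (R : realType) m n (A B : 'M[R]_(m, n)) ca cb :
  bnd A ca -> bnd B cb -> bnd (A + B) (ca + cb).
Proof. move=> hA hB i j; rewrite mxE; apply: le_trans (ler_normD _ _) _; exact: lerD. Qed.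

Lemma bnd_sub (R : realType) m n (A B : 'M[R]_(m, n)) ca cb :
  bnd A ca -> bnd B cb -> bnd (A - B) (ca + cb).
Proof. move=> hA hB i j; rewrite !mxE; apply: le_trans (ler_normB _ _) _; exact: lerD. Qed.

Lemma bnd_opp (R : realType) m n (A : 'M[R]_(m, n)) ca : bnd A ca -> bnd (- A) ca.
Proof. by move=> hA i j; rewrite !mxE normrN. Qed.

Lemma bnd_tr (R : realType) m n (A : 'M[R]_(m, n)) ca : bnd A ca -> bnd A^T ca.
Proof. by move=> hA i j; rewrite !mxE. Qed.

Lemma bnd_le (R : realType) m n (A : 'M[R]_(m, n)) ca cb : ca <= cb -> bnd A ca -> bnd A cb.
Proof. by move=> h hA i j; apply: le_trans (hA i j) h. Qed.

Lemma bnd_diagr (R : realType) m n (A : 'M[R]_(m, n)) (v : 'rV[R]_n) ca cv :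
  0 <= cv -> bnd A ca -> (forall j, `|v 0 j| <= cv) -> bnd (A *m diag_mx v) (ca * cv).
Proof.
move=> hcv hA hv i j; rewrite mul_mx_diag mxE normrM; apply: ler_pM => //.
Qed.

Lemma bnd_diagl (R : realType) m n (A : 'M[R]_(m, n)) (v : 'rV[R]_m) ca cv :
  0 <= ca -> bnd A ca -> (forall j, `|v 0 j| <= cv) -> bnd (diag_mx v *m A) (cv * ca).
Proof.
move=> hca hA hv i j; rewrite mul_diag_mx mxE normrM; apply: ler_pM => //.
Qed.

Lemma entry_frob (R : realType) m n (A : 'M[R]_(m, n)) i j : `|A i j| <= frob A.
Proof.
rewrite /frob -sqrtr_sqr; apply: ler_wsqrtr.
apply: (@le_trans _ _ (\sum_(j' < n) A i j' ^+ 2)).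
  by rewrite (bigD1 j) //= lerDl; apply: sumr_ge0 => k _; exact: sqr_ge0.
rewrite (bigD1 i) //= lerDl; apply: sumr_ge0 => k _; apply: sumr_ge0 => l _; exact: sqr_ge0.
Qed.

Lemma frob_ge0 (R : realType) m n (A : 'M[R]_(m, n)) : 0 <= frob A.
Proof. exact: sqrtr_ge0. Qed.

Lemma stiefel_bnd (R : realType) m n (X : 'M[R]_(m, n)) : X^T *m X = 1%:M -> bnd X 1.
Proof.
move=> hX i j.
have h : \sum_(k < m) X k j ^+ 2 = 1.
  have := congr1 (fun Z : 'M[R]_n => Z j j) hX; rewrite !mxE eqxx /= => h1.
  rewrite -[RHS]h1; apply: eq_bigr => k _; by rewrite !mxE expr2.
have : X i j ^+ 2 <= 1.
  rewrite -h (bigD1 i) //= lerDl; apply: sumr_ge0 => k _; exact: sqr_ge0.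
move=> h2; have h3 : `|X i j| ^+ 2 <= 1 by rewrite -normrX ger0_norm ?sqr_ge0.
have := normr_ge0 (X i j); nra.
Qed.
Lemma idents (R : realType) d K (Q X : 'M[R]_(d,K)) (D L N : 'M[R]_K) :
  Q^T *m Q = 1%:M -> X^T *m X = 1%:M -> D^T = D -> D *m D = 1%:M -> D *m L *m D = L ->
  L^T = L -> N^T = N ->
  let Y := X - Q *m D in let E := Q^T *m Y in let W := Y - Q *m E in
  let B := D + E in let S := B^T *m L *m B in
  let P0 := Q *m L *m Q^T *m X *m N in
  let G := (1%:M - X *m X^T) *m P0 in
  [/\ W *m L *m N = - (G - Q *m (Q^T *m G)) - W *m (S - L) *m N,
      S - L = E^T *m L *m D + D *m (L *m E) + E^T *m L *m E,
      X^T *m P0 - (X^T *m P0)^T = S *m N - N *m S,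
      D *m E + E^T *m D = - (Y^T *m Y) &
      Y = Q *m E + W].
Proof.
move=> hQ hX hD hDD hDLD hL hN Y E W B S P0 G.
have hB : Q^T *m X = B.
  by rewrite /B /E /Y mulmxBr mulmxA hQ mul1mx addrC subrK.
have hYW : Y = Q *m E + W by rewrite /W addrC subrK.
have hXW : X = Q *m B + W.
  by rewrite /B mulmxDr -addrA -hYW /Y addrC subrK.
have hQW : Q^T *m W = 0.
  by rewrite /W mulmxBr mulmxA hQ mul1mx /E subrr.
have hXQ : X^T *m Q = B^T by rewrite -hB trmx_mul trmxK.
set Z0 := L *m B *m N.
have hP : P0 = Q *m Z0 by rewrite /P0 /Z0 -hB !mulmxA.
have hG : G = Q *m Z0 - X *m (B^T *m Z0).
  by rewrite /G hP mulmxBl mul1mx -[X *m X^T *m _]mulmxA (mulmxA X^T) hXQ.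
have hQG : Q^T *m G = Z0 - B *m (B^T *m Z0).
  by rewrite hG mulmxBr !mulmxA hQ mul1mx hB.
have hBZ : B^T *m Z0 = S *m N by rewrite /Z0 /S !mulmxA.
have hGQ : G - Q *m (Q^T *m G) = - (W *m (S *m N)).
  rewrite hQG hG mulmxBr mulmxA -hBZ.
  have -> : W = X - Q *m B by rewrite hXW addrC addKr.
  rewrite mulmxBl !mulmxA; apply/matrixP => i j; rewrite !mxE; ring.
split.
- rewrite hGQ opprK !mulmxBr !mulmxBl !mulmxA; apply/matrixP => i j; rewrite !mxE; ring.
- have hBt : B^T = D + E^T.
    apply/matrixP => i j; rewrite /B !mxE; congr (_ + _); by rewrite -{2}hD mxE.
  rewrite /S hBt /B !mulmxDl !mulmxDr hDLD.
  rewrite !mulmxA; apply/matrixP => i j; rewrite !mxE; ring.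
- rewrite hP mulmxA hXQ hBZ trmx_mul.
  have -> : S^T = S by rewrite /S !trmx_mul trmxK hL mulmxA.
  by rewrite hN.
- have hX' : X = Y + Q *m D by rewrite /Y subrK.
  have h := hX; rewrite [in X^T]hX' [in _ *m X]hX' [(Y + _)^T]linearD /= trmx_mul hD in h.
  rewrite mulmxDl (mulmxDr Y^T) (mulmxDr (D *m Q^T)) !mulmxA -(mulmxA D Q^T Q) hQ mulmx1 hDD in h.
  rewrite /E trmx_mul trmxK !mulmxA.
  apply/matrixP => i j; have := congr1 (fun Z : 'M_K => Z i j) h.
  rewrite !mxE => h2; lra.
- exact: hYW.
Qed.

Lemma term_le_sum (R : realType) (I : finType) (F : I -> R) i :
  (forall j, 0 <= F j) -> F i <= \sum_j F j.
Proof. by move=> h; rewrite (bigD1 i) //= lerDl; apply: sumr_ge0 => j _. Qed.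
Arguments term_le_sum {R I} F i _.

Lemma core (R : realType) d K (hKd : (K <= d)%N) (Q : 'M[R]_(d,K)) (hQ : Q^T *m Q = 1%:M)
 (lam a : 'I_K -> R) (hl0 : forall i, 0 <= lam i) (ha0 : forall i, 0 <= a i)
 (hld : forall i j, i != j -> lam i != lam j) (had : forall i j, i != j -> a i != a j)
 (mu : R) (hmu : 0 < mu) (hmul : forall i, mu <= lam i * a i) :
 exists C : R, 0 < C /\ forall (X : 'M[R]_(d,K)) (q : {ffun 'I_K -> bool}) (g : R),
   X^T *m X = 1%:M -> frob (X - Q *m sign_diag R q) <= 1 -> 0 <= g ->
   bnd ((1%:M - X *m X^T) *m (Q *m diag_mx (\row_i lam i) *m Q^T *m X *m diag_mx (\row_i a i))) g ->
   bnd (X^T *m (Q *m diag_mx (\row_i lam i) *m Q^T *m X *m diag_mx (\row_i a i))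
        - (X^T *m (Q *m diag_mx (\row_i lam i) *m Q^T *m X *m diag_mx (\row_i a i)))^T) g ->
   bnd (X - Q *m sign_diag R q) (C * (g + frob (X - Q *m sign_diag R q) ^+ 2)).
Proof.
set m : R := d%:R + 1.
set Lam := \sum_i lam i. set A1 := \sum_i a i.
set Gl := \sum_i \sum_j `|lam i - lam j|^-1. set Ga := \sum_i \sum_j `|a i - a j|^-1.
have hm1 : 1 <= m by rewrite /m lerDr.
have hm0 : 0 <= m by lra.
have hdm : d%:R <= m by rewrite /m lerDl.
have hKm : K%:R <= m by apply: le_trans hdm; rewrite ler_nat.
have hLam0 : 0 <= Lam by apply: sumr_ge0.
have hA10 : 0 <= A1 by apply: sumr_ge0.
have hlL : forall i, lam i <= Lam by move=> i; exact: term_le_sum.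
have haA : forall i, a i <= A1 by move=> i; exact: term_le_sum.
have hGl0 : 0 <= Gl by apply: sumr_ge0 => i _; apply: sumr_ge0 => j _; rewrite invr_ge0.
have hGa0 : 0 <= Ga by apply: sumr_ge0 => i _; apply: sumr_ge0 => j _; rewrite invr_ge0.
have hGl : forall i j, `|lam i - lam j|^-1 <= Gl.
  move=> i j; apply: le_trans.
    apply: (term_le_sum (fun j' => `|lam i - lam j'|^-1) j).
    by move=> j'; rewrite invr_ge0.
  apply: (term_le_sum (fun i' => \sum_j' `|lam i' - lam j'|^-1) i).
  by move=> i'; apply: sumr_ge0 => j' _; rewrite invr_ge0.
have hGa : forall i j, `|a i - a j|^-1 <= Ga.
  move=> i j; apply: le_trans.
    apply: (term_le_sum (fun j' => `|a i - a j'|^-1) j).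
    by move=> j'; rewrite invr_ge0.
  apply: (term_le_sum (fun i' => \sum_j' `|a i' - a j'|^-1) i).
  by move=> i'; apply: sumr_ge0 => j' _; rewrite invr_ge0.
set cW := 1 + m * m.
set cS := 2 * m * Lam + m * m * m * Lam.
set cF := Gl * (Ga + Lam * m + m * m * m * Lam) + m.
have hcW : 0 <= cW by rewrite /cW; apply: addr_ge0 => //; apply: mulr_ge0.
have hcS : 0 <= cS by rewrite /cS; apply: addr_ge0; do 3 (apply: mulr_ge0 => //).
have hcF : 0 <= cF.
  rewrite /cF; apply: addr_ge0 => //; apply: mulr_ge0 => //.
  apply: addr_ge0; [apply: addr_ge0 => //; exact: mulr_ge0 | do 3 (apply: mulr_ge0 => //)].
exists (m * cF + (cW + m * cW * cS * A1) / mu + 1); split.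
  have : 0 <= (cW + m * cW * cS * A1) / mu.
    apply: divr_ge0; last exact: ltW.
    apply: addr_ge0 => //; do 3 (apply: mulr_ge0 => //).
  have : 0 <= m * cF by exact: mulr_ge0.
  lra.
move=> X q g hX hY1 hg hG hT.
set L := diag_mx (\row_i lam i). set N := diag_mx (\row_i a i).
set D := sign_diag R q.
pose sg := fun i : 'I_K => (if q i then 1 else -1 : R).
have hsg : forall i, `|sg i| = 1.
  by move=> i; rewrite /sg; case: (q i); rewrite ?normrN normr1.
have hsg2 : forall i, sg i * sg i = 1.
  by move=> i; rewrite /sg; case: (q i); rewrite ?mulNr ?mulrN ?opprK mulr1.
have hDl : forall n (Z : 'M[R]_(K, n)) i j, (D *m Z) i j = sg i * Z i j.
  by move=> n Z i j; rewrite /D /sign_diag mul_diag_mx !mxE.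
have hDr : forall n (Z : 'M[R]_(n, K)) i j, (Z *m D) i j = Z i j * sg j.
  by move=> n Z i j; rewrite /D /sign_diag mul_mx_diag !mxE.
have hLr : forall n (Z : 'M[R]_(n, K)) i j, (Z *m L) i j = Z i j * lam j.
  by move=> n Z i j; rewrite /L mul_mx_diag !mxE.
have hLl : forall n (Z : 'M[R]_(K, n)) i j, (L *m Z) i j = lam i * Z i j.
  by move=> n Z i j; rewrite /L mul_diag_mx !mxE.
have hNr : forall n (Z : 'M[R]_(n, K)) i j, (Z *m N) i j = Z i j * a j.
  by move=> n Z i j; rewrite /N mul_mx_diag !mxE.
have hNl : forall n (Z : 'M[R]_(K, n)) i j, (N *m Z) i j = a i * Z i j.
  by move=> n Z i j; rewrite /N mul_diag_mx !mxE.
have hDt : D^T = D by rewrite /D /sign_diag tr_diag_mx.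
have hLt : L^T = L by rewrite /L tr_diag_mx.
have hNt : N^T = N by rewrite /N tr_diag_mx.
have hDD : D *m D = 1%:M.
  apply/matrixP => i j; rewrite hDl /D /sign_diag !mxE -/(sg i).
  case: eqP => [->|_]; by rewrite ?mulr1n ?mulr0n ?mulr0 ?hsg2.
have hDLD : D *m L *m D = L.
  apply/matrixP => i j; rewrite hDr hDl /L !mxE.
  case: eqP => [->|_]; rewrite ?mulr1n ?mulr0n ?mulr0 ?mul0r //.
  by rewrite mulrC mulrA hsg2 mul1r.
have [e1 e2 e3 e4 e5] := idents hQ hX hDt hDD hDLD hLt hNt.
set Y := X - Q *m D in e1 e2 e3 e4 e5 hY1 *.
set E := Q^T *m Y in e1 e2 e4 e5 *.
set W := Y - Q *m E in e1 e5 *.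
set S := (D + E)^T *m L *m (D + E) in e1 e2 e3.
set y := frob Y in hY1 *.
have subE : forall m' n' (A B : 'M[R]_(m', n')) i j, (A - B) i j = A i j - B i j.
  by move=> *; rewrite !mxE.
have addE : forall m' n' (A B : 'M[R]_(m', n')) i j, (A + B) i j = A i j + B i j.
  by move=> *; rewrite !mxE.
have oppE : forall m' n' (A : 'M[R]_(m', n')) i j, (- A) i j = - A i j.
  by move=> *; rewrite !mxE.
have trE : forall m' n' (A : 'M[R]_(m', n')) i j, A^T i j = A j i.
  by move=> *; rewrite !mxE.
have hy0 : 0 <= y by exact: frob_ge0.
have hYb : bnd Y y by move=> i j; exact: entry_frob.
have hQb : bnd Q 1 := stiefel_bnd hQ.
have hQtb : bnd Q^T 1 := bnd_tr hQb.
have h01 : (0 : R) <= 1 by [].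
have hEb1 : bnd E (m * 1 * y) := bnd_mul hdm h01 hy0 hQtb hYb.
have hmy : 0 <= m * 1 * y by rewrite mulr1; exact: mulr_ge0.
have hQE : bnd (Q *m E) (m * 1 * (m * 1 * y)) := bnd_mul hKm h01 hmy hQb hEb1.
have hWb : bnd W (cW * y).
  apply: bnd_le (bnd_sub hYb hQE); apply: eqle; rewrite /cW; ring.
have hYY : bnd (Y^T *m Y) (m * y * y) := bnd_mul hdm hy0 hy0 (bnd_tr hYb) hYb.
have bLr : forall n (Z : 'M[R]_(n, K)) c, bnd Z c -> bnd (Z *m L) (c * Lam).
  move=> n Z c hZ i j; rewrite hLr normrM (ger0_norm (hl0 j)).
  by apply: ler_pM.
have bLl : forall n (Z : 'M[R]_(K, n)) c, bnd Z c -> bnd (L *m Z) (Lam * c).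
  move=> n Z c hZ i j; rewrite hLl normrM (ger0_norm (hl0 i)).
  by apply: ler_pM.
have bNr : forall n (Z : 'M[R]_(n, K)) c, bnd Z c -> bnd (Z *m N) (c * A1).
  move=> n Z c hZ i j; rewrite hNr normrM (ger0_norm (ha0 j)).
  by apply: ler_pM.
have bDr : forall n (Z : 'M[R]_(n, K)) c, bnd Z c -> bnd (Z *m D) c.
  by move=> n Z c hZ i j; rewrite hDr normrM hsg mulr1.
have bDl : forall n (Z : 'M[R]_(K, n)) c, bnd Z c -> bnd (D *m Z) c.
  by move=> n Z c hZ i j; rewrite hDl normrM hsg mul1r.
have hELD : bnd (E^T *m L *m D) (m * 1 * y * Lam) := bDr _ _ _ (bLr _ _ _ (bnd_tr hEb1)).
have hDLE : bnd (D *m (L *m E)) (Lam * (m * 1 * y)) := bDl _ _ _ (bLl _ _ _ hEb1).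
have hmyL : 0 <= m * 1 * y * Lam by exact: mulr_ge0.
have hELE : bnd (E^T *m L *m E) (m * (m * 1 * y * Lam) * (m * 1 * y)) :=
  bnd_mul hKm hmyL hmy (bLr _ _ _ (bnd_tr hEb1)) hEb1.
have hSL : bnd (S - L) (cS * y).
  rewrite e2; apply: bnd_le (bnd_add (bnd_add hELD hDLE) hELE).
  have h1 : 0 <= (m * m * m * Lam * y) * (1 - y).
    apply: mulr_ge0; last by lra.
    by do 4 (apply: mulr_ge0 => //).
  rewrite /cS; nra.
have hWy : 0 <= cW * y by exact: mulr_ge0.
have hSy : 0 <= cS * y by exact: mulr_ge0.
have hWSLN : bnd (W *m (S - L) *m N) (m * (cW * y) * (cS * y) * A1) :=
  bNr _ _ _ (bnd_mul hKm hWy hSy hWb hSL).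
set G := (1%:M - X *m X^T) *m _ in hG e1.
have hmg : 0 <= m * 1 * g by rewrite mulr1; exact: mulr_ge0.
have hQQG : bnd (Q *m (Q^T *m G)) (m * 1 * (m * 1 * g)) :=
  bnd_mul hKm h01 hmg hQb (bnd_mul hdm h01 hg hQtb hG).
have hWLN : bnd (W *m L *m N) (cW * g + m * cW * cS * A1 * y ^+ 2).
  rewrite e1; apply: bnd_le (bnd_sub (bnd_opp (bnd_sub hG hQQG)) hWSLN).
  by apply: eqle; rewrite /cW; ring.
have hWij : forall i j, `|W i j| <= (cW * g + m * cW * cS * A1 * y ^+ 2) / mu.
  move=> i j; have := hWLN i j.
  rewrite hNr hLr !normrM (ger0_norm (ha0 j)) (ger0_norm (hl0 j)) => h.
  rewrite ler_pdivlMr //; apply: le_trans h; rewrite -mulrA.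
  by apply: ler_wpM2l => //; exact: hmul.
rewrite e3 in hT.
have hSij : forall i j, i != j -> `|S i j| <= g * Ga.
  move=> i j hij; have := hT i j; rewrite subE hNr hNl => h.
  have hne : a j - a i != 0 by rewrite subr_eq0 had // eq_sym.
  have -> : `|S i j| = `|S i j * a j - a i * S i j| * `|a j - a i|^-1.
    have -> : S i j * a j - a i * S i j = S i j * (a j - a i) by ring.
    by rewrite normrM mulfK // normr_eq0.
  apply: ler_pM => //; first by rewrite invr_ge0.
have hcFm : m <= cF.
  rewrite /cF lerDr; apply: mulr_ge0 => //.
  apply: addr_ge0; [apply: addr_ge0 => //; exact: mulr_ge0 | do 3 (apply: mulr_ge0 => //)].
have hgy : 0 <= g + y ^+ 2 by apply: addr_ge0 => //; exact: sqr_ge0.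
have hEb : bnd E (cF * (g + y ^+ 2)).
  move=> i j.
  have h2 := congr1 (fun Z : 'M[R]_K => Z i j) e2.
  have h4 := congr1 (fun Z : 'M[R]_K => Z i j) e4.
  rewrite /= subE !addE hDr hLr hDl hLl !trE in h2.
  rewrite /= addE oppE hDl hDr trE in h4.
  have hnE : `|E i j| = `|sg i * E i j| by rewrite normrM hsg mul1r.
  have hYYij := hYY i j.
  case: (eqVneq i j) => [eij | nij].
    subst j.
    have h5 : sg i * E i i = - (Y^T *m Y) i i / 2.
      apply: (@mulIf _ 2); first by rewrite pnatr_eq0.
      rewrite mulfVK ?pnatr_eq0 // -h4 mulrC [E i i * _]mulrC; ring.
    rewrite hnE h5 normrM normrN normfV normr_nat.
    rewrite ler_pdivrMr ?ltr0n //.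
    have : m * y * y <= cF * (g + y ^+ 2).
      apply: (@le_trans _ _ (m * (g + y ^+ 2))).
        rewrite -mulrA ler_wpM2l // -expr2 lerDr //.
      by apply: ler_wpM2r.
    have : 0 <= cF * (g + y ^+ 2) by apply: mulr_ge0.
    lra.
  have hSLij : (S - L) i j = S i j by rewrite subE /L !mxE (negbTE nij) mulr0n subr0.
  have key : (lam i - lam j) * (sg i * E i j)
           = (S - L) i j + lam j * (Y^T *m Y) i j - (E^T *m L *m E) i j.
    rewrite subE h2; apply/eqP; rewrite -subr_eq0; apply/eqP.
    transitivity (- lam j * (sg i * E i j + E j i * sg j + (Y^T *m Y) i j)); first by ring.
    by rewrite h4 addNr mulr0.
  have hne : lam i - lam j != 0 by rewrite subr_eq0 hld.
  have hE' : `|sg i * E i j|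
      = `|lam i - lam j|^-1 * `|(S - L) i j + lam j * (Y^T *m Y) i j - (E^T *m L *m E) i j|.
    by symmetry; rewrite -key normrM mulKf // normr_eq0.
  rewrite hnE hE' hSLij.
  have hA : `|S i j + lam j * (Y^T *m Y) i j - (E^T *m L *m E) i j|
      <= g * Ga + Lam * (m * y * y) + m * (m * 1 * y * Lam) * (m * 1 * y).
    apply: le_trans (ler_normB _ _) _; apply: lerD; last exact: hELE.
    apply: le_trans (ler_normD _ _) _; apply: lerD; first exact: hSij.
    rewrite normrM ger0_norm //; exact: ler_pM.
  have hB : g * Ga + Lam * (m * y * y) + m * (m * 1 * y * Lam) * (m * 1 * y)
      <= (Ga + Lam * m + m * m * m * Lam) * (g + y ^+ 2).
    have : 0 <= Lam * m * g by do 2 (apply: mulr_ge0 => //).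
    have : 0 <= m * m * m * Lam * g by do 4 (apply: mulr_ge0 => //).
    have : 0 <= Ga * y ^+ 2 by apply: mulr_ge0 => //; exact: sqr_ge0.
    rewrite expr2; nra.
  apply: (@le_trans _ _ (Gl * ((Ga + Lam * m + m * m * m * Lam) * (g + y ^+ 2)))).
    apply: ler_pM => //; first by rewrite invr_ge0.
    exact: le_trans hA hB.
  rewrite mulrA /cF [in X in _ <= X]mulrDl lerDl; exact: mulr_ge0.
have hFg : 0 <= cF * (g + y ^+ 2) by exact: mulr_ge0.
rewrite e5 => i j; rewrite addE; apply: le_trans (ler_normD _ _) _.
have h1 := bnd_mul hKm h01 hFg hQb hEb i j.
have h2 := hWij i j.
have h3 : (cW * g + m * cW * cS * A1 * y ^+ 2) / mu <= (cW + m * cW * cS * A1) / mu * (g + y ^+ 2).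
  rewrite [in X in _ <= X]mulrAC; apply: ler_wpM2r; first by rewrite invr_ge0 ltW.
  have : 0 <= cW * y ^+ 2 by apply: mulr_ge0 => //; exact: sqr_ge0.
  have : 0 <= m * cW * cS * A1 * g by do 4 (apply: mulr_ge0 => //).
  nra.
have : 0 <= g + y ^+ 2 by [].
have -> : (m * cF + (cW + m * cW * cS * A1) / mu + 1) * (g + y ^+ 2)
   = m * 1 * (cF * (g + y ^+ 2)) + (cW + m * cW * cS * A1) / mu * (g + y ^+ 2) + (g + y ^+ 2).
  by ring.
lra.
Qed.

Theorem theorem2 (R : realType) (d k : nat) (hdK : (k.+1 < d)%N)
    (Q : 'M[R]_(d, k.+1)) (hQ : stiefel Q)
    (lam a : 'I_k.+1 -> R)
    (hlam : forall i j : 'I_k.+1, (i < j)%N -> lam j < lam i)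
    (hlamK : 0 < lam ord_max)
    (ha : forall i j : 'I_k.+1, (i < j)%N -> a j < a i)
    (haK : 0 < a ord_max) :
  exists delta : R,
    [/\ 0 < delta, delta < Num.sqrt 2 / 2,
        0 < lam ord_max * a ord_max - lam ord0 * a ord0 * delta &
        forall alpha : R, 0 <= alpha ->
          alpha < lam ord_max * a ord_max - lam ord0 * a ord0 * delta ->
          exists eta1 : R, 0 < eta1 /\
            forall X : 'M[R]_(d, k.+1), stiefel X -> dF X Q <= delta ->
              forall (U : 'M[R]_(d, k.+1)) (s : 'rV[R]_k.+1) (V : 'M[R]_k.+1),
                thin_svd (Aalpha Q lam a alpha X) U s V ->
                dF X Q <= eta1 * residual X (Aalpha Q lam a alpha X) s V].
Proof.
have hQ' : Q^T *m Q = 1%:M := hQ.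
have hlpos : forall i, lam ord_max <= lam i.
  move=> i; have [h|h|h] := ltngtP i (@ord_max k).
  - exact: (ltW (hlam i ord_max h)).
  - by exfalso; move: h; rewrite ltnNge leq_ord.
  - by rewrite (ord_inj h).
have hapos : forall i, a ord_max <= a i.
  move=> i; have [h|h|h] := ltngtP i (@ord_max k).
  - exact: (ltW (ha i ord_max h)).
  - by exfalso; move: h; rewrite ltnNge leq_ord.
  - by rewrite (ord_inj h).
have hl0 : forall i, 0 <= lam i by move=> i; apply: le_trans (ltW hlamK) (hlpos i).
have ha0 : forall i, 0 <= a i by move=> i; apply: le_trans (ltW haK) (hapos i).
have hld : forall i j, i != j -> lam i != lam j.
  move=> i j hij; have [h|h|h] := ltngtP i j.
  - by rewrite (gt_eqF (hlam _ _ h)).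
  - by rewrite (lt_eqF (hlam _ _ h)).
  - by rewrite (ord_inj h) eqxx in hij.
have had : forall i j, i != j -> a i != a j.
  move=> i j hij; have [h|h|h] := ltngtP i j.
  - by rewrite (gt_eqF (ha _ _ h)).
  - by rewrite (lt_eqF (ha _ _ h)).
  - by rewrite (ord_inj h) eqxx in hij.
set mu := lam ord_max * a ord_max.
have hmu : 0 < mu by apply: mulr_gt0.
have hmul : forall i, mu <= lam i * a i.
  move=> i; rewrite /mu; apply: ler_pM; [exact: ltW hlamK | exact: ltW haK | exact: hlpos | exact: hapos].
have hKd : (k.+1 <= d)%N := ltnW hdK.
have [C [hC0 hC]] := core hKd hQ' hl0 ha0 hld had hmu hmul.
set m : R := d%:R.
have hm0 : 0 <= m by rewrite /m ler0n.
set c0 := 1 + m * m + 2 * m.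
have hc0 : 0 <= c0 by rewrite /c0; apply: addr_ge0; [apply: addr_ge0 => //; exact: mulr_ge0 | exact: mulr_ge0].
set Z := (d * k.+1)%:R * C.
have hZ : 0 <= Z by apply: mulr_ge0 => //; exact: ltW.
set l1 := lam ord0 * a ord0.
set t := l1 / mu.
have ht : 0 <= t by apply: divr_ge0; [exact: mulr_ge0 | exact: ltW].
have hl1 : l1 = t * mu by rewrite /t mulfVK // gt_eqF.
set Den := 2 + 2 * Z + 2 * t.
have hDen : 2 <= Den by rewrite /Den; lra.
set delta := Den^-1.
have hdel0 : 0 < delta by rewrite /delta invr_gt0; lra.
have hdD : delta * Den = 1 by rewrite /delta mulVf // gt_eqF //; lra.
have hdel1 : delta <= 1 / 2 by nra.
have hZd : Z * delta <= 1 / 2.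
  have : 0 <= t * delta by apply: mulr_ge0 => //; exact: ltW.
  rewrite /Den in hdD; nra.
exists delta; split => //.
- have h2 : 1 < Num.sqrt (2 : R) by rewrite -[X in X < _]sqrtr1 ltr_sqrt; lra.
  lra.
- rewrite hl1.
  have h1 : 0 < mu * delta by exact: mulr_gt0.
  have h2 : 0 <= Z * (mu * delta) by apply: mulr_ge0 => //; exact: ltW.
  have h3 : 0 <= t * (mu * delta) by apply: mulr_ge0 => //; exact: ltW.
  have e : mu * delta * Den = mu by rewrite -mulrA hdD mulr1.
  rewrite /Den in e; nra.
move=> alpha _ _.
exists (2 * Z * c0 + 1); split.
  have : 0 <= Z * c0 by exact: mulr_ge0.
  lra.
move=> X hX hdF U s V [hU [hV [hs hAsvd]]].
have [q hq] : exists q, frob (X - Q *m sign_diag R q) <= delta.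
  case: (boolP [exists q, frob (X - Q *m sign_diag R q) <= delta]) => [/existsP [q hq]|/existsPn hn].
    by exists q.
  exfalso; have : delta < dF X Q.
    rewrite /dF; apply: lt_bigmin => [|q' _]; rewrite ltNge; exact: hn.
  by rewrite ltNge hdF.
have hdFq : dF X Q <= frob (X - Q *m sign_diag R q) by rewrite /dF; exact: bigmin_le.
have hTh : Theta lam *m Theta lam = diag_mx (\row_i lam i).
  apply/matrixP => i j; rewrite /Theta mul_diag_mx !mxE.
  case: eqP => [->|_]; rewrite ?mulr1n ?mulr0n ?mulr0 //.
  by rewrite -expr2 sqr_sqrtr.
set P0 := Q *m diag_mx (\row_i lam i) *m Q^T *m X *m diag_mx (\row_i a i).
have hA' : Aalpha Q lam a alpha X = alpha *: X + P0 by rewrite /Aalpha hTh.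
set P := V *m diag_mx s *m V^T.
have hres : residual X (Aalpha Q lam a alpha X) s V = frob (X *m P - (alpha *: X + P0)).
  by rewrite /residual /P hA' !mulmxA.
rewrite hres.
set R0 := X *m P - (alpha *: X + P0).
set r := frob R0.
have hPt : P^T = P by rewrite /P !trmx_mul trmxK tr_diag_mx mulmxA.
have eXR : X^T *m R0 = P - alpha *: 1%:M - X^T *m P0.
  rewrite /R0 mulmxBr mulmxDr mulmxA hX mul1mx -scalemxAr hX.
  by rewrite opprD addrA.
have eG : (1%:M - X *m X^T) *m P0 = X *m (X^T *m R0) - R0.
  rewrite eXR /R0 mulmxBl mul1mx !mulmxBr -scalemxAr mulmx1 !mulmxA.
  apply/matrixP => i j; rewrite !mxE; ring.
have eT : X^T *m P0 - (X^T *m P0)^T = (X^T *m R0)^T - X^T *m R0.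
  have e' : X^T *m P0 = P - alpha *: 1%:M - X^T *m R0.
    by rewrite eXR; apply/matrixP => i j; rewrite !mxE; ring.
  move: (X^T *m R0) e' => W0 ->.
  rewrite !linearB /= hPt.
  apply/matrixP => i j; rewrite !mxE eq_sym; ring.
have hr0 : 0 <= r by exact: frob_ge0.
have hR0 : bnd R0 r by move=> i j; exact: entry_frob.
have hXb : bnd X 1 := stiefel_bnd hX.
have h01 : (0 : R) <= 1 by [].
have hXR : bnd (X^T *m R0) (m * 1 * r) := bnd_mul (lexx _) h01 hr0 (bnd_tr hXb) hR0.
have hmr : 0 <= m * 1 * r by rewrite mulr1; exact: mulr_ge0.
have hKm : k.+1%:R <= m by rewrite /m ler_nat.
have hG : bnd ((1%:M - X *m X^T) *m P0) (c0 * r).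
  rewrite eG; apply: bnd_le (bnd_sub (bnd_mul hKm h01 hmr hXb hXR) hR0).
  have : 0 <= m * r by exact: mulr_ge0.
  rewrite /c0; nra.
have hT : bnd (X^T *m P0 - (X^T *m P0)^T) (c0 * r).
  rewrite eT; apply: bnd_le (bnd_sub (bnd_tr hXR) hXR).
  have : 0 <= m * m * r by do 2 (apply: mulr_ge0 => //).
  rewrite /c0; nra.
have hg : 0 <= c0 * r by exact: mulr_ge0.
have hq1 : frob (X - Q *m sign_diag R q) <= 1 by lra.
have hY := hC X q (c0 * r) hX hq1 hg hG hT.
set Y := X - Q *m sign_diag R q in hq hdFq hY.
set y := frob Y in hq hdFq hY.
set g := c0 * r in hg hY.
have hy0 : 0 <= y by exact: frob_ge0.
have hsq : y ^+ 2 = \sum_i \sum_j Y i j ^+ 2.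
  rewrite /y /frob sqr_sqrtr //; apply: sumr_ge0 => i _; apply: sumr_ge0 => j _; exact: sqr_ge0.
have hsum : y ^+ 2 <= Z * (g + y ^+ 2) * y.
  rewrite {1}hsq.
  apply: (@le_trans _ _ (\sum_(i < d) \sum_(j < k.+1) (C * (g + y ^+ 2) * y))).
    apply: ler_sum => i _; apply: ler_sum => j _.
    rewrite -[Y i j ^+ 2]ger0_norm ?sqr_ge0 // normrX expr2.
    apply: ler_pM => //; try exact: hY; exact: entry_frob.
  rewrite !sumr_const !card_ord -mulrnA -mulr_natr /Z mulnC; apply: eqle; ring.
have hyd : y <= delta by [].
have hy2 : y <= 2 * Z * g.
  have [->|ypos] := eqVneq y 0.
    by rewrite -mulrA; apply: mulr_ge0 => //; exact: mulr_ge0.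
  have yp : 0 < y by rewrite lt_def ypos hy0.
  have h1 : y <= Z * (g + y ^+ 2).
    rewrite -(ler_pM2r yp) -expr2; exact: hsum.
  have h2 : Z * y <= 1 / 2 by apply: le_trans hZd; apply: ler_wpM2l.
  have h3 : Z * y * y <= 1 / 2 * y by apply: ler_wpM2r.
  rewrite expr2 in h1; nra.
apply: le_trans hdFq _; apply: le_trans hy2 _.
rewrite /g; have : 0 <= Z * c0 * r by do 2 (apply: mulr_ge0 => //). 
nra.
Qed.
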